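(* Let $\mathcal{S}$ be a nonempty semigroup such that $|\mathcal{S}\setminus E(\mathcal{S})|$ is finite, and let $T$ be an $\mathcal{S}$-valued sequence of length $|\mathcal{S}\setminus E(\mathcal{S})|$. Then $\prod(T)\cap E(\mathcal{S})=\emptyset$ if and only if $\mathcal{R}=\langle \mathrm{supp}(T)\rangle$ is a finite commutative semigroup with $\mathcal{S}\setminus\mathcal{R}\subseteq E(\mathcal{S})$, the universal semilattice $Y(\mathcal{R})$ is a chain, $x_1*x_2=x_1$ for all $x_1,x_2\in\mathcal{R}$ with $x_1\lneqq_{\mathcal{N}_{\mathcal{R}}} x_2$, and moreover: (i) each archimedean component of $\mathcal{R}$ is either a finite cyclic semigroup $\langle x\rangle$ with $x\in\mathrm{supp}(T)$ and $\mathcal{I}(x)\equiv 1\pmod{\mathcal{P}(x)}$, or an ideal extension of a nontrivial finite cyclic group $\langle x_2\rangle$ by a nontrivial finite cyclic nilsemigroup $\langle x_1\rangle$ with $x_1,x_2\in\mathrm{supp}(T)$ and with the partial homomorphism $\varphi^{\langle x_1\rangle}_{\langle x_2\rangle}$ trivial, i.e. $\varphi^{\langle x_1\rangle}_{\langle x_2\rangle}(x_1)=x_1*e_{\langle x_2\rangle}=e_{\langle x_2\rangle}$, where $e_{\langle x_2\rangle}$ is the identity element of the group $\langle x_2\rangle$; (ii) $\mathrm{v}_x(T)=\mathcal{I}(x)+\mathcal{P}(x)-2$ for each $x\in\mathrm{supp}(T)$.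
   Context: $(\mathcal{S},* )$ is a semigroup, $E(\mathcal{S})=\{e\in\mathcal{S}: e*e=e\}$. For a finite sequence $T$ of elements of $\mathcal{S}$: $\prod(T)$ is the set of all products of the terms of nonempty subsequences of $T$ taken in every possible order; $\mathrm{supp}(T)$ is the set of elements occurring in $T$; $\mathrm{v}_x(T)$ is the number of times $x$ occurs in $T$. $\langle X\rangle$ is the subsemigroup generated by $X$. For $x$ with $\langle x\rangle$ finite, the index $\mathcal{I}(x)$ is the least $r>0$ with $x^r=x^t$ for some positive $t\neq r$, and the period $\mathcal{P}(x)$ is the least $k>0$ with $x^{\mathcal{I}(x)+k}=x^{\mathcal{I}(x)}$. For a commutative semigroup $\mathcal{R}$: $a\leqq_{\mathcal{N}_{\mathcal{R}}} b$ means $a^m=b*c$ for some $c\in\mathcal{R}$ and integer $m>0$; $a\,\mathcal{N}_{\mathcal{R}}\,b$ means $a\leqq b$ and $b\leqq a$; $a\lneqq_{\mathcal{N}_{\mathcal{R}}} b$ means $a\leqq b$ but not $b\leqq a$. $\mathcal{N}_{\mathcal{R}}$ is a congruence, the quotient $Y(\mathcal{R})=\mathcal{R}/\mathcal{N}_{\mathcal{R}}$ is a semilattice (the universal semilattice), and its classes are the archimedean components of $\mathcal{R}$. A nilsemigroup is a semigroup with zero $0$ in which every element has some power equal to $0$. If $G$ is an ideal of a semigroup $B$ and $Q$ is the Rees quotient $B/G$ (collapsing $G$ to a zero), $B$ is called an ideal extension of $G$ by $Q$; when $B$ is a finite commutative archimedean semigroup that is an ideal extension of a group $G$ by a nilsemigroup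 $N$, the associated partial homomorphism $\varphi^N_G: N\setminus\{0_N\}=B\setminus G\to G$ is $a\mapsto a*e_G$, with $e_G$ the identity of $G$. *)

(* Defs.v *)
From mathcomp Require Import all_boot.
From Stdlib Require Import ClassicalEpsilon.
Set Implicit Arguments. Unset Strict Implicit. Unset Printing Implicit Defensive.

Section Semigroup.
Variables (S : eqType) (mul : S -> S -> S).

(* x^n for n >= 1 (spow x 0 = x is junk, never used) *)
Definition spow (x : S) (n : nat) : S := iter n.-1 (mul x) x.

Definition wprod (x : S) (l : seq S) : S := foldl mul x l.

(* Prod(T): products of nonempty subsequences of T taken in every order *)
Definition in_Prod (T : seq S) (a : S) : Prop :=
  exists (x : S) (l t : seq S), subseq t T /\ perm_eq (x :: l) t /\ a = wprod x l.

Definition gen (X : S -> Prop) (a : S) : Prop :=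
  exists (x : S) (l : seq S), X x /\ (forall y, y \in l -> X y) /\ a = wprod x l.

Definition gen1 (x : S) (a : S) : Prop := exists n, 0 < n /\ a = spow x n.

Definition finite_set (X : S -> Prop) : Prop := exists l : seq S, forall x, X x -> x \in l.

Definition is_index (x : S) (r : nat) : Prop :=
  0 < r /\ (exists t, 0 < t /\ t <> r /\ spow x r = spow x t) /\
  forall r', 0 < r' -> (exists t, 0 < t /\ t <> r' /\ spow x r' = spow x t) -> r <= r'.
Definition sindex (x : S) : nat := epsilon (inhabits 0) (is_index x).
Definition is_period (x : S) (k : nat) : Prop :=
  0 < k /\ spow x (sindex x + k) = spow x (sindex x) /\
  forall k', 0 < k' -> spow x (sindex x + k') = spow x (sindex x) -> k <= k'.
Definition speriod (x : S) : nat := epsilon (inhabits 0) (is_period x).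

(* the natural (Tamura) preorder and congruence N_R on a commutative semigroup R *)
Definition leN (R : S -> Prop) (a b : S) : Prop :=
  exists m c, 0 < m /\ R c /\ spow a m = mul b c.
Definition NR (R : S -> Prop) (a b : S) : Prop := leN R a b /\ leN R b a.
Definition ltN (R : S -> Prop) (a b : S) : Prop := leN R a b /\ ~ leN R b a.

(* the universal semilattice Y(R) = R / N_R (ordered by the order induced by <=_N)
   is a chain *)
Definition Y_chain (R : S -> Prop) : Prop :=
  forall a b, R a -> R b -> leN R a b \/ leN R b a.

(* C is an ideal extension of the nontrivial finite cyclic group <x2> by the
   nontrivial finite cyclic nilsemigroup generated by (the class of) x1, with
   trivial partial homomorphism: x1 * e = e. *)
Definition ideal_ext_case (C : S -> Prop) (x1 x2 : S) : Prop :=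
  let G := gen1 x2 in
  (forall g, G g -> C g) /\
  (forall a g, C a -> G g -> G (mul a g) /\ G (mul g a)) /\
  (exists e, G e /\
     (forall g, G g -> mul e g = g /\ mul g e = g) /\
     (forall g, G g -> exists h, G h /\ mul g h = e /\ mul h g = e) /\
     (exists g, G g /\ g <> e) /\
     mul x1 e = e) /\
  (* the Rees quotient C/<x2> is a nontrivial cyclic nilsemigroup generated by
     the class of x1 *)
  C x1 /\ ~ G x1 /\
  (forall b, C b -> ~ G b -> gen1 x1 b) /\
  (forall b, C b -> exists n, 0 < n /\ G (spow b n)).

Definition arch_component_ok (T : seq S) (C : S -> Prop) : Prop :=
  (exists x, x \in T /\ (forall b, C b <-> gen1 x b) /\
             sindex x = 1 %[mod speriod x])
  \/
  (exists x1 x2, x1 \in T /\ x2 \in T /\ ideal_ext_case C x1 x2).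

End Semigroup.

(* Main.v *)
Require Import Defs.
From mathcomp Require Import all_boot zify.
From Stdlib Require Import ClassicalEpsilon Classical.
Unset Printing Implicit Defensive.

Lemma ex_min (P : nat -> Prop) n : P n -> exists m, P m /\ forall k, P k -> m <= k.
Proof.
elim/ltn_ind: n => n IH Pn.
case: (classic (exists k, P k /\ k < n)) => [[k [Pk kn]]|H].
  exact: IH Pk.
exists n; split => // k Pk; case: (leqP n k) => // kn; exfalso; apply: H; by exists k.
Qed.

Section Cyc.
Variables (S : eqType) (mul : S -> S -> S).
Hypothesis mulA : forall x y z, mul x (mul y z) = mul (mul x y) z.
Local Notation pw := (spow mul).

Lemma pw1 x : pw x 1 = x. Proof. by []. Qed.
Lemma pwS x n : 0 < n -> pw x n.+1 = mul x (pw x n).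
Proof. by case: n => // n _; rewrite /spow /= iterS. Qed.

Lemma pwD x m n : 0 < m -> 0 < n -> pw x (m + n) = mul (pw x m) (pw x n).
Proof.
elim: m => // m IH _ n0; case: m IH => [|m] IH; first by rewrite add1n pwS.
by rewrite addSn pwS ?addn_gt0 ?n0 ?orbT // IH // pwS // mulA.
Qed.

Lemma pwC x m n : 0 < m -> 0 < n -> mul (pw x m) (pw x n) = mul (pw x n) (pw x m).
Proof. by move=> m0 n0; rewrite -!pwD // addnC. Qed.

Lemma pwM x m n : 0 < m -> 0 < n -> pw (pw x m) n = pw x (m * n).
Proof.
move=> m0; elim: n => // n IH _; case: n IH => [|n] IH; first by rewrite muln1.
rewrite pwS // IH // -pwD //; [congr pw; nia | nia].
Qed.

Lemma pw_shift x a b c : 0 < a -> 0 < b -> pw x a = pw x b -> pw x (a + c) = pw x (b + c).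
Proof.
move=> a0 b0 E; case: c => [|c]; first by rewrite !addn0.
by rewrite !pwD // E.
Qed.

Definition rep x r := exists t, 0 < t /\ t <> r /\ pw x r = pw x t.

Variable x : S.
Hypothesis fin : exists r t, 0 < r /\ r < t /\ pw x r = pw x t.

Lemma is_index_ex : is_index mul x (sindex mul x).
Proof.
rewrite /sindex; apply: epsilon_spec.
case: fin => r [t [r0 [rt E]]].
have [m [[m0 Pm] mmin]] : exists m, (0 < m /\ rep x m) /\ forall k, (0 < k /\ rep x k) -> m <= k.
  apply: (@ex_min (fun m => 0 < m /\ rep x m) r); split => //; exists t; split; [lia|split;[lia|done]].
exists m; split => //; split => // r' r0' Pr'; exact: mmin.
Qed.

Local Notation i := (sindex mul x).

Lemma i_gt0 : 0 < i. Proof. by case: is_index_ex. Qed.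

Lemma is_period_ex : is_period mul x (speriod mul x).
Proof.
rewrite /speriod; apply: epsilon_spec.
case: is_index_ex => i0 [[t [t0 [ti E]]] imin].
have ti' : i < t.
  case: (ltngtP i t) => // H; last by case: ti.
  have := imin t t0 (ex_intro _ i (conj i0 (conj (nesym ti) (esym E)))); lia.
have [m [[m0 Pm] mmin]] : exists m, (0 < m /\ pw x (i + m) = pw x i) /\
   forall k, (0 < k /\ pw x (i + k) = pw x i) -> m <= k.
  apply: (@ex_min _ (t - i)); split; first lia; by rewrite subnKC ?E // ltnW.
exists m; split => //; split => // k k0 Pk; exact: mmin.
Qed.

Local Notation p := (speriod mul x).
Lemma p_gt0 : 0 < p. Proof. by case: is_period_ex. Qed.

Lemma P1 b : i <= b -> pw x (b + p) = pw x b.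
Proof.
move=> ib; have i0 := i_gt0; have p0 := p_gt0.
have E : pw x (i + p) = pw x i by case: is_period_ex => _ [].
case: (posnP (b - i)) => H.
  by have -> : b = i by lia.
have -> : b + p = (b - i) + (i + p) by lia.
rewrite pwD ?addn_gt0 ?i0 // E -pwD //; congr pw; lia.
Qed.

Lemma P2 a q : i <= a -> pw x (a + q * p) = pw x a.
Proof.
move=> ia; elim: q => [|q IH]; first by rewrite mul0n addn0.
have -> : a + q.+1 * p = (a + q * p) + p by rewrite mulSn; lia.
by rewrite P1 ?IH // (leq_trans ia) ?leq_addr.
Qed.

Lemma P3 a b : i <= a -> i <= b -> a = b %[mod p] -> pw x a = pw x b.
Proof.
move=> ia ib; wlog ab : a b ia ib / a <= b.
  move=> W E; case: (leqP a b) => H; first exact: W.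
  symmetry; apply: W; [done|done|exact: ltnW|by rewrite E].
move=> /eqP; rewrite eq_sym eqn_mod_dvd //; move=> /dvdnP [q Hq].
have -> : b = a + q * p by lia.
by rewrite P2.
Qed.

Lemma P4 a b : 0 < a -> a < b -> pw x a = pw x b -> i <= a /\ p %| b - a.
Proof.
move=> a0 ab E; have i0 := i_gt0; have p0 := p_gt0.
have ia : i <= a.
  case: is_index_ex => _ [_ imin]; apply: imin => //; exists b; split; [lia|split;[lia|done]].
split => //.
have Hd : b - a = (b - a) %/ p * p + (b - a) %% p := divn_eq (b - a) p.
set r := (b - a) %% p in Hd; set q := (b - a) %/ p in Hd.
have rp : r < p by rewrite ltn_mod.
have E1 : pw x (a + r) = pw x a.
  rewrite -(P2 (a + r) q) ?(leq_trans ia) ?leq_addr // E.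
  congr pw; lia.
have E2 : pw x (i + a * p + r) = pw x (i + a * p).
  have := @pw_shift x (a + r) a (i + a * p - a) ltac:(lia) a0 E1.
  have ap : a <= a * p by rewrite leq_pmulr.
  have -> : a + r + (i + a * p - a) = i + a * p + r by lia.
  by move=> ->; congr pw; lia.
have E3 : pw x (i + r) = pw x i.
  by rewrite -(P2 (i + r) a) // ?leq_addr // -(P2 i a) // -E2; congr pw; lia.
case: (posnP r) => r0.
  by apply/dvdnP; exists q; lia.
case: is_period_ex => _ [_ pmin]; have := pmin r r0 E3; lia.
Qed.

Lemma C3 a b : 0 < a -> 0 < b -> pw x a = pw x b ->
  a = b \/ (i <= a /\ i <= b /\ a = b %[mod p]).
Proof.
move=> a0 b0 E; case: (ltngtP a b) => H; last by left.
- have [ia dv] := P4 a b a0 H E; right; split => //; split; first lia.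
  by apply/eqP; rewrite eq_sym eqn_mod_dvd // ltnW.
- have [ib dv] := P4 b a b0 H (esym E); right; split; first lia; split => //.
  by apply/eqP; rewrite eqn_mod_dvd // ltnW.
Qed.

Lemma C4 n : 0 < n -> (mul (pw x n) (pw x n) = pw x n <-> i <= n /\ p %| n).
Proof.
move=> n0; rewrite -pwD //; split.
  move=> E; case: (C3 n (n+n) n0 ltac:(lia) (esym E)) => [H|[H0 [_ H]]]; first lia.
  split => //; move/eqP: H; by rewrite eq_sym eqn_mod_dvd ?leq_addr // addnK.
move=> [ni pn]; apply: P3; lia || idtac.
by apply/eqP; rewrite eqn_mod_dvd ?leq_addr // addnK.
Qed.

Lemma pw_idem_uniq a b : 0 < a -> 0 < b ->
  mul (pw x a) (pw x a) = pw x a -> mul (pw x b) (pw x b) = pw x b -> pw x a = pw x b.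
Proof.
move=> a0 b0 /(C4 a a0) [ia pa] /(C4 b b0) [ib pb]; apply: P3 => //.
move/dvdnP: pa => [u ->]; move/dvdnP: pb => [v ->]; by rewrite !modnMl.
Qed.

End Cyc.

Section Cyc2.
Variables (S : eqType) (mul : S -> S -> S).
Hypothesis mulA : forall x y z, mul x (mul y z) = mul (mul x y) z.
Local Notation pw := (spow mul).
Variable x : S.
Hypothesis fin : exists r t, 0 < r /\ r < t /\ pw x r = pw x t.
Local Notation i := (sindex mul x).
Local Notation p := (speriod mul x).
Local Notation idem y := (mul y y = y).

Let C3x := C3 S mul mulA x fin.
Let C4x := C4 S mul mulA x fin.
Let i_gt0x := i_gt0 S mul x fin.
Let p_gt0x := p_gt0 S mul x fin.

Lemma back1 n : 0 < n -> pw x (n.+1) = x -> i = 1 /\ p %| n.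
Proof.
move=> n0 E; have i0 := i_gt0x.
case: (C3x 1 n.+1 isT isT (esym E)) => [H|[H1 [_ H]]]; first lia.
split; first lia.
by move/eqP: H; rewrite eq_sym eqn_mod_dvd // subn1.
Qed.

Lemma back2 n : 0 < n -> pw x (n.+1) = pw x n -> p = 1.
Proof.
move=> n0 E; have p0 := p_gt0x.
case: (C3x n n.+1 n0 isT (esym E)) => [|[_ [_ H]]]; first lia.
move/eqP: H; rewrite eq_sym eqn_mod_dvd // subSnn dvdn1 ; by move/eqP.
Qed.

Lemma idem_ip : idem (pw x (i * p)).
Proof.
have i0 := i_gt0x; have p0 := p_gt0x.
apply/(C4x); first by rewrite muln_gt0 i0.
by rewrite leq_pmulr // dvdn_mull.
Qed.

Lemma idem_bound v : (forall k, 0 < k <= v -> ~ idem (pw x k)) -> v <= i + p - 2.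
Proof.
move=> H; have i0 := i_gt0x; have p0 := p_gt0x.
case: (leqP v (i + p - 2)) => // Hv.
set m := i + p - 1.
have Hm : m = m %/ p * p + m %% p := divn_eq m p.
have mp : m %% p < p by rewrite ltn_mod.
set k := m %/ p * p.
exfalso; apply: (H k).
  have : 0 < k by lia. lia.
apply/(C4x); first lia.
split; first lia.
by rewrite dvdn_mull.
Qed.

Lemma nonidem_range k : i = 1 %[mod p] -> 0 < k -> k <= i + p - 2 -> ~ idem (pw x k).
Proof.
move=> Hi k0 kb /(C4x k k0) [ik pk].
have p0 := p_gt0x.
case: (ltnP 1 p) => p1; last lia.
move: Hi; rewrite (modn_small p1) => Hi.
have Hd := divn_eq i p; rewrite Hi in Hd.
move/dvdnP: pk => [s Hs].
have : (i %/ p) * p < s * p by lia.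
rewrite ltn_pmul2r // => Hq.
have : (i %/ p).+1 * p <= s * p by rewrite leq_pmul2r.
rewrite mulSn; lia.
Qed.

Lemma cong1 : p %| i + p - 1 -> i = 1 %[mod p].
Proof.
move=> H; have i0 := i_gt0x; have p0 := p_gt0x.
have : p %| (i - 1) + p by have -> : i - 1 + p = i + p - 1 by lia.
rewrite dvdn_addl // => H1.
by apply/eqP; rewrite eqn_mod_dvd.
Qed.

End Cyc2.

Section Fin.
Variables (S : eqType) (mul : S -> S -> S).
Hypothesis mulA : forall x y z, mul x (mul y z) = mul (mul x y) z.
Local Notation pw := (spow mul).
Variable NE : seq S.
Hypothesis NE_def : forall x, x \in NE <-> mul x x <> x.

Lemma fin_all x : exists r t, 0 < r /\ r < t /\ pw x r = pw x t.
Proof.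
apply: NNPP => H.
have D : forall r t, 0 < r -> r < t -> pw x r <> pw x t.
  move=> r t r0 rt E; apply: H; by exists r, t.
set L := map (pw x) (iota 1 (size NE).+1).
have uL : uniq L.
  rewrite map_inj_in_uniq ?iota_uniq // => a b; rewrite !mem_iota => /andP[a1 _] /andP[b1 _] E.
  case: (ltngtP a b) => // ab; [exfalso; exact: (D a b a1 ab E)|exfalso; exact: (D b a b1 ab (esym E))].
have sub : {subset L <= NE}.
  move=> y /mapP [k]; rewrite mem_iota => /andP [k1 _] ->.
  apply/NE_def; rewrite -pwD // => E; apply: (D k (k+k)); [lia|lia|by rewrite E].
have := uniq_leq_size uL sub; rewrite size_map size_iota; lia.
Qed.

End Fin.

Definition bP (P : Prop) : bool := if excluded_middle_informative P then true else false.
Lemma bPE (P : Prop) : bP P <-> P.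
Proof. by rewrite /bP; case: excluded_middle_informative. Qed.

Lemma count_lt (T : eqType) (a b : pred T) s :
  (forall z, a z -> b z) -> (exists z, z \in s /\ b z /\ ~~ a z) -> count a s < count b s.
Proof.
move=> ab [z [zs [bz naz]]].
elim: s zs => // y s IH; rewrite inE => /orP [/eqP <-|zs] /=.
  rewrite bz (negbTE naz) add0n add1n ltnS.
  by apply: sub_count => w; apply: ab.
have H : (a y : nat) <= b y.
  by case Ha: (a y) => //; rewrite (ab y Ha).
have := IH zs; lia.
Qed.

Lemma size_le_count (T : eqType) (a : pred T) s l :
  uniq l -> {subset l <= s} -> all a l -> uniq s -> size l <= count a s.
Proof.
move=> ul ls al us.
have -> : size l = count (mem l) s.
  rewrite -size_filter; apply/perm_size; apply: uniq_perm => //; first exact: filter_uniq.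
  move=> z; rewrite mem_filter; case H: (z \in l) => /=; rewrite H // (ls z) // H.
apply: sub_count => z /= zl; by move/allP: al => ->.
Qed.

Lemma count_rcons (T : eqType) (a : pred T) s x : count a (rcons s x) = count a s + a x.
Proof. by rewrite -cats1 count_cat /= addn0. Qed.

Section Prods.
Variables (S : eqType) (mul : S -> S -> S).
Hypothesis mulA : forall x y z, mul x (mul y z) = mul (mul x y) z.
Local Notation pw := (spow mul).
Local Notation idem y := (mul y y = y).

Definition msub (u W : seq S) := forall z, count_mem z u <= count_mem z W.
Definition inP (W : seq S) a := exists x l, msub (x :: l) W /\ a = wprod mul x l.

Lemma in_Prod_iff W a : in_Prod mul W a <-> inP W a.
Proof.
split.
  move=> [x [l [t [st [pt E]]]]]; exists x, l; split => // z.
  by rewrite (permP pt); apply: leq_count_subseq.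
move=> [x [l [ms E]]]; have [t st pt] := (count_subseqP (x :: l) W).1 ms.
by exists x, l, t.
Qed.

Lemma msub_trans u v w : msub u v -> msub v w -> msub u w.
Proof. by move=> H1 H2 z; apply: leq_trans (H1 z) (H2 z). Qed.

Lemma inP_mono W W' a : msub W W' -> inP W a -> inP W' a.
Proof. by move=> H [x [l [ms E]]]; exists x, l; split => //; apply: msub_trans H. Qed.

Lemma msub_cons y W : msub W (y :: W).
Proof. by move=> z /=; rewrite leq_addl. Qed.

Lemma wprod_rcons x l y : wprod mul x (rcons l y) = mul (wprod mul x l) y.
Proof. by rewrite /wprod foldl_rcons. Qed.

Lemma wprod_nseq x n : wprod mul x (nseq n x) = pw x n.+1.
Proof.
elim: n => // n IH.
have -> : nseq n.+1 x = rcons (nseq n x) x by clear IH; elim: n => //= n ->.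
by rewrite wprod_rcons IH -(pwD S mul mulA x n.+1 1) // addn1.
Qed.

Lemma absorb_l y w c : mul y w = y -> 0 < c -> mul (pw y c) w = pw y c.
Proof.
move=> E; elim: c => // c IH _; case: c IH => [|c] IH; first by [].
by rewrite pwS // -mulA IH.
Qed.

Lemma absorb_r y w c : mul y w = w -> 0 < c -> mul (pw y c) w = w.
Proof.
move=> E; elim: c => // c IH _; case: c IH => [|c] IH; first by [].
by rewrite pwS // -mulA IH.
Qed.

Variable A : S -> Prop.
Hypothesis Pair : forall y w, A y -> A w -> y <> w ->
  mul y w = mul w y /\ (mul y w = y \/ mul y w = w).

Lemma prod_form x l : A x -> (forall z, z \in l -> A z) ->
  exists y, y \in x :: l /\ wprod mul x l = pw y (count_mem y (x :: l)) /\
    (forall z, z \in x :: l -> z <> y -> mul y z = y).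
Proof.
move=> Ax; elim/last_ind: l => [|l w IH] Al.
  exists x; split; first by rewrite inE eqxx.
  split; first by rewrite /= eqxx.
  by move=> z; rewrite inE => /eqP.
have Al' : forall z, z \in l -> A z by move=> z zl; apply: Al; rewrite mem_rcons inE zl orbT.
have [y [yl [E M]]] := IH Al'.
have Aw : A w by apply: Al; rewrite mem_rcons inE eqxx.
have Ay : A y by move: yl; rewrite inE => /orP [/eqP ->//|]; apply: Al'.
have c0 : 0 < count_mem y (x :: l).
  by rewrite -has_count has_pred1.
rewrite wprod_rcons E -rcons_cons.
case: (eqVneq w y) => [->|wy].
  exists y; split; first by rewrite mem_rcons inE eqxx.
  split; last by move=> z; rewrite mem_rcons inE => /orP [/eqP ->//|]; apply: M.
  rewrite count_rcons /= eqxx addn1; have := pwD S mul mulA y _ 1 c0 isT; rewrite pw1 addn1 => <- //.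
have yw : y <> w by move=> e; rewrite e eqxx in wy.
have [C [H|H]] := Pair y w Ay Aw yw.
- exists y; split; first by rewrite mem_rcons inE yl orbT.
  split; first by rewrite count_rcons /= (negbTE wy) addn0 absorb_l.
  move=> z; rewrite mem_rcons inE => /orP [/eqP ->//|]; apply: M.
- have wnl : w \notin x :: l.
    apply/negP => wl; have := M w wl (nesym yw). by rewrite H => /esym; apply: yw.
  exists w; split; first by rewrite mem_rcons inE eqxx.
  split.
    rewrite count_rcons /= eqxx addn1 absorb_r //.
    have cw : count_mem w (x :: l) = 0 by apply/count_memPn.
    by move: cw => /= ->.
  move=> z; rewrite mem_rcons inE => /orP [/eqP ->//|zl zw].
  case: (eqVneq z y) => [->|zy]; first by rewrite -C.
  have Hw : mul w y = w by rewrite -C.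
  by rewrite -{1}Hw -mulA (M z zl (elimN eqP zy)) Hw.
Qed.

End Prods.

Section Fwd.
Variables (S : eqType) (mul : S -> S -> S).
Hypothesis mulA : forall x y z, mul x (mul y z) = mul (mul x y) z.
Local Notation pw := (spow mul).
Local Notation idem y := (mul y y = y).
Variable NE : seq S.
Hypothesis NE_uniq : uniq NE.
Hypothesis NE_def : forall x, x \in NE <-> mul x x <> x.
Variable T : seq S.
Hypothesis HT : size T = size NE.
Local Notation inP := (inP S mul).
Local Notation msub := (msub S).
Hypothesis Hno : forall a, inP T a -> ~ idem a.

Let fin x := fin_all S mul mulA NE NE_def x.
Arguments inP_mono {S mul W W' a}.
Arguments msub_cons {S}.
Arguments msub_trans {S u v w}.
Arguments wprod_rcons {S mul}.
Arguments count_rcons {T}.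

Lemma grow W y : msub (y :: W) T -> exists z, inP (y :: W) z /\ ~ inP W z.
Proof.
move=> sub; apply: NNPP => H.
have inc : forall z, inP (y :: W) z -> inP W z.
  by move=> z Hz; apply: NNPP => Hn; apply: H; exists z.
have P : forall n, inP W (pw y n.+1).
  elim => [|n IH].
    apply: inc; exists y, [::]; split => // z /=; rewrite addn0; case: (y == z) => //=; lia.
  apply: inc; case: IH => [x [l [ms E]]]; exists x, (rcons l y); split.
    move=> z; have := ms z; rewrite /= count_rcons /=; case: (y == z) => /=; lia.
  by rewrite wprod_rcons -E; have := pwD S mul mulA y n.+1 1 isT isT; rewrite addn1 => ->.
have i0 := i_gt0 S mul y (fin y); have p0 := p_gt0 S mul y (fin y).
have := P (sindex mul y * speriod mul y).-1; rewrite prednK ?muln_gt0 ?i0 // => Hp.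
apply: (Hno _ (inP_mono (msub_trans (msub_cons _ _) sub) Hp)); exact: idem_ip.
Qed.

Definition cnt W := count (fun z => bP (inP W z)) NE.

Lemma cnt_grow W y : msub (y :: W) T -> cnt W < cnt (y :: W).
Proof.
move=> sub; have [z [Hz Hnz]] := grow _ _ sub.
apply: count_lt.
  move=> a /bPE Ha; apply/bPE; exact: inP_mono (msub_cons _ _) Ha.
exists z; split; last by split; [apply/bPE | apply/negP => /bPE].
apply/NE_def; apply: Hno; apply: inP_mono Hz; exact: sub.
Qed.

Lemma cnt_D D W : msub (D ++ W) T -> cnt W + size D <= cnt (D ++ W).
Proof.
elim: D => [|d D IH] /= sub; first by rewrite addn0.
have sub' : msub (D ++ W) T by apply: msub_trans (msub_cons _ _) sub.
have := IH sub'; have := cnt_grow _ _ sub; lia.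
Qed.

Lemma cnt_perm W W' : perm_eq W W' -> cnt W = cnt W'.
Proof.
move=> /permP pW; apply: eq_count => z.
have E : forall a, inP W a <-> inP W' a.
  by move=> a; split => [[x [l [ms ->]]]|[x [l [ms ->]]]]; exists x, l; split => // u;
    rewrite ?pW // -pW.
by apply/idP/idP => /bPE H; apply/bPE; apply/E.
Qed.

Lemma cnt_max W : cnt W <= size T.
Proof. by rewrite HT count_size. Qed.

Lemma cnt_le W : msub W T -> cnt W <= size W.
Proof.
move=> /count_subseqP [t st pt]; have [s3 ps3] := perm_to_subseq st.
have P : perm_eq T (s3 ++ W).
  apply: (perm_trans ps3); rewrite perm_catC perm_cat2l perm_sym //.
have := cnt_D s3 W.
have sub : msub (s3 ++ W) T by move=> z; rewrite (permP P).
move=> /(_ sub); have := cnt_max (s3 ++ W); rewrite (perm_size P) size_cat; lia.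
Qed.

Lemma allNE s : ~ idem s -> inP T s.
Proof.
move=> ns.
have := cnt_D T [::]; rewrite cats0 => /(_ (fun z => leqnn _)).
have := cnt_max T; rewrite /cnt HT => H1 H2.
have : all (fun z => bP (inP T z)) NE by rewrite all_count eqn_leq count_size; lia.
move/allP => /(_ s); rewrite (proj2 (NE_def s) ns) => /(_ isT) /bPE //.
Qed.

Lemma inP_T y : y \in T -> inP T y.
Proof.
move=> yT; exists y, [::]; split => // z /=; rewrite addn0.
by case: eqP => //= <-; rewrite -has_count has_pred1.
Qed.

Lemma T_nonidem y : y \in T -> ~ idem y.
Proof. by move=> /inP_T; apply: Hno. Qed.

Lemma Pair y w : y \in T -> w \in T -> y <> w ->
  mul y w = mul w y /\ (mul y w = y \/ mul y w = w).
Proof.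
move=> yT wT yw.
have sub : msub [:: y; w] T.
  move=> z /=; rewrite addn0.
  have y1 : 0 < count_mem y T by rewrite -has_count has_pred1.
  have w1 : 0 < count_mem w T by rewrite -has_count has_pred1.
  case: (eqVneq y z) => [E|nyz]; case: (eqVneq w z) => [E'|nwz] /=.
  - by exfalso; apply: yw; rewrite E E'.
  - by subst z; lia.
  - by subst z; lia.
  - lia.
have c2 := cnt_le _ sub.
have iy : inP [:: y; w] y by exists y, [::]; split => // z /=; lia.
have iw : inP [:: y; w] w by exists w, [::]; split => // z /=; lia.
have iyw : inP [:: y; w] (mul y w) by exists y, [:: w]; split => // z /=; lia.
have iwy : inP [:: y; w] (mul w y) by exists w, [:: y]; split => // z /=; lia.
have nE : forall a, inP [:: y; w] a -> a \in NE.
  by move=> a Ha; apply/NE_def; apply: Hno; apply: inP_mono sub Ha.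
have two : forall a, inP [:: y; w] a -> a = y \/ a = w.
  move=> a Ha; apply: NNPP => H.
  have : size [:: y; w; a] <= cnt [:: y; w].
    apply: size_le_count => //=.
    - rewrite !inE !negb_or andbT -andbA; apply/and3P; split; apply/negP => /eqP E.
      + by apply: yw.
      + by apply: H; left.
      + by apply: H; right.
    - move=> b; rewrite !inE => /or3P [/eqP->|/eqP->|/eqP->]; exact: nE.
    - by apply/and4P; split => //; apply/bPE.
  move: c2; rewrite /=; lia.
have ny := T_nonidem _ yT; have nw := T_nonidem _ wT.
case: (two _ iyw) => E1; case: (two _ iwy) => E2.
- by split; [rewrite E1 E2|left].
- exfalso; apply: ny; by rewrite -{1}E1 -mulA E2 E1.
- exfalso; apply: ny; by rewrite -{2}E2 mulA E1 E2.
- by split; [rewrite E1 E2|right].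
Qed.

End Fwd.

Section Fwd2.
Variables (S : eqType) (mul : S -> S -> S).
Hypothesis mulA : forall x y z, mul x (mul y z) = mul (mul x y) z.
Local Notation pw := (spow mul).
Local Notation idem y := (mul y y = y).
Variable NE : seq S.
Hypothesis NE_uniq : uniq NE.
Hypothesis NE_def : forall x, x \in NE <-> mul x x <> x.
Variable T : seq S.
Hypothesis HT : size T = size NE.
Local Notation inP := (inP S mul).
Local Notation msub := (msub S).
Hypothesis Hno : forall a, inP T a -> ~ idem a.
Local Notation ix x := (sindex mul x).
Local Notation px x := (speriod mul x).

Let fin x := fin_all S mul mulA NE NE_def x.
Let PairT := Pair S mul mulA NE NE_uniq NE_def T HT Hno.
Let allNE' := allNE S mul mulA NE NE_uniq NE_def T HT Hno.
Let Tni := T_nonidem S mul T Hno.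
Let C3' x := C3 S mul mulA x (fin x).
Let C4' x := C4 S mul mulA x (fin x).
Let back1' x := back1 S mul mulA x (fin x).
Let i0 x := i_gt0 S mul x (fin x).
Let p0 x := p_gt0 S mul x (fin x).
Let idem_bound' x := idem_bound S mul mulA x (fin x).
Let nonidem_range' x := nonidem_range S mul mulA x (fin x).
Let cong1' x := cong1 S mul x (fin x).

Lemma prodT a : inP T a -> exists y, y \in T /\ exists c, 0 < c <= count_mem y T /\ a = pw y c.
Proof.
move=> [x [l [ms ->]]].
have inT : forall z, z \in x :: l -> z \in T.
  move=> z zl; have H2 := ms z.
  have H1 : 0 < count_mem z (x :: l) by rewrite -has_count has_pred1.
  rewrite -has_pred1 has_count; exact: leq_trans H1 H2.
have [y [yl [E _]]] := prod_form S mul mulA (fun z => z \in T)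
   PairT x l (inT x (mem_head _ _)) (fun z zl => inT z (mem_behead (s := x :: l) zl)).
exists y; split; first exact: inT.
exists (count_mem y (x :: l)); split => //.
by rewrite ms andbT -has_count has_pred1.
Qed.

Lemma powT y k : y \in T -> 0 < k <= count_mem y T -> inP T (pw y k).
Proof.
move=> yT /andP [k0 kc]; exists y, (nseq k.-1 y); split.
  move=> z; rewrite /= count_nseq /=; case: (eqVneq y z) => [<-|] /=; lia.
by rewrite wprod_nseq // prednK.
Qed.

Lemma OL y w n n' : y \in T -> w \in T -> y <> w -> mul y w = y -> 0 < n -> 0 < n' ->
  pw y n = pw w n' -> pw y n.+1 = y.
Proof.
move=> yT wT yw E n0 n'0 Ez.
have [C _] := PairT y w yT wT yw.
have := pwD S mul mulA y n 1 n0 isT; rewrite addn1 pw1 => ->.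
by rewrite Ez absorb_r // -C.
Qed.

Lemma Cross x y n c : x \in T -> y \in T -> x <> y -> 0 < n -> 0 < c ->
  pw x n = pw y c -> ~ idem (pw x n) -> mul x y = x /\ ix x = 1 /\ px x %| n.
Proof.
move=> xT yT xy n0 c0 E ni.
have [C [H|H]] := PairT x y xT yT xy.
  by split => //; apply: back1' => //; apply: (OL x y n c).
exfalso; apply: ni.
have H' : mul y x = y by rewrite -C.
have := OL y x c n yT xT (nesym xy) H' c0 n0 (esym E) => /(back1' y c c0) [iy py].
by rewrite E; apply/(C4' y c c0); rewrite iy.
Qed.

Lemma cnt_ok x : x \in T -> ix x = 1 %[mod px x] /\ count_mem x T = ix x + px x - 2.
Proof.
move=> xT; set v := count_mem x T.
have v0 : 0 < v by rewrite -has_count has_pred1.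
have ip0 := i0 x; have pp0 := p0 x.
have ub : v <= ix x + px x - 2.
  apply: idem_bound' => k kv; apply: Hno; exact: powT.
have dv : px x %| ix x + px x - 1.
  apply: NNPP => nd.
  have ni : ~ idem (pw x (ix x + px x - 1)) by move/(C4' x (ix x + px x - 1) ltac:(lia)) => [_ ?].
  have [y [yT [c [/andP [c0 cv] E]]]] := prodT _ (allNE' _ ni).
  case: (eqVneq x y) => [exy|xy].
    subst y; case: (C3' x (ix x + px x - 1) c ltac:(lia) c0 E) => [|[_ [ic H]]]; first lia.
    move/eqP: H; rewrite eqn_mod_dvd; last lia.
    have : 0 < ix x + px x - 1 - c by lia.
    move=> H0 /(dvdn_leq H0); lia.
  have xy' : x <> y by apply/eqP.
  have [_ [i1 pd]] := Cross x y (ix x + px x - 1) c xT yT xy' ltac:(lia) c0 E ni.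
  by apply: nd; rewrite i1 add1n subn1.
have ic := cong1' x dv.
split => //.
apply/eqP; rewrite eqn_leq ub /=; apply: NNPP => /negP; rewrite -ltnNge => lt.
have ni : ~ idem (pw x v.+1) by apply: nonidem_range' => //; lia.
have [y [yT [c [/andP [c0 cv] E]]]] := prodT _ (allNE' _ ni).
case: (eqVneq x y) => [exy|xy].
  subst y; case: (C3' x v.+1 c isT c0 E) => [|[_ [ic' H]]]; first lia.
  move/eqP: H; rewrite eqn_mod_dvd; last lia.
  have : 0 < v.+1 - c by lia.
  move=> H0 /(dvdn_leq H0); lia.
have xy' : x <> y by apply/eqP.
have [_ [i1 pd]] := Cross x y v.+1 c xT yT xy' isT c0 E ni.
have : 0 < v.+1 by []. move=> H0; move/(dvdn_leq H0): pd; lia.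
Qed.

End Fwd2.

Section Fwd3.
Variables (S : eqType) (mul : S -> S -> S).
Hypothesis mulA : forall x y z, mul x (mul y z) = mul (mul x y) z.
Local Notation pw := (spow mul).
Local Notation idem y := (mul y y = y).
Variable NE : seq S.
Hypothesis NE_uniq : uniq NE.
Hypothesis NE_def : forall x, x \in NE <-> mul x x <> x.
Variable T : seq S.
Hypothesis HT : size T = size NE.
Local Notation inP := (inP S mul).
Hypothesis Hno : forall a, inP T a -> ~ idem a.
Local Notation ix x := (sindex mul x).
Local Notation px x := (speriod mul x).
Local Notation R := (gen mul (fun y => y \in T)).

Let fin x := fin_all S mul mulA NE NE_def x.
Let PairT := Pair S mul mulA NE NE_uniq NE_def T HT Hno.
Let allNE' := allNE S mul mulA NE NE_uniq NE_def T HT Hno.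
Let Tni := T_nonidem S mul T Hno.
Let C4' x := C4 S mul mulA x (fin x).
Let back1' x := back1 S mul mulA x (fin x).
Let i0 x := i_gt0 S mul x (fin x).
Let p0 x := p_gt0 S mul x (fin x).
Let P3' x := P3 S mul mulA x (fin x).
Let uniq_id x := pw_idem_uniq S mul mulA x (fin x).
Let prodT' := prodT S mul mulA NE NE_uniq NE_def T HT Hno.
Let OL' := OL S mul mulA NE NE_uniq NE_def T HT Hno.
Let idem_ip' x := idem_ip S mul mulA x (fin x).

Lemma genR a : R a <-> exists y, y \in T /\ exists n, 0 < n /\ a = pw y n.
Proof.
split.
  move=> [x [l [xT [lT ->]]]].
  have [y [yl [E _]]] := prod_form S mul mulA (fun z => z \in T) PairT x l xT lT.
  exists y; split; first by move: yl; rewrite inE => /orP [/eqP ->|/lT].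
  exists (count_mem y (x :: l)); split => //; by rewrite -has_count has_pred1.
move=> [y [yT [n [n0 ->]]]]; exists y, (nseq n.-1 y); split => //; split.
  by move=> z /nseqP [->].
by rewrite wprod_nseq // prednK.
Qed.

Lemma RT y n : y \in T -> 0 < n -> R (pw y n).
Proof. by move=> yT n0; apply/genR; exists y; split => //; exists n. Qed.

Lemma L_left a y n : mul a y = y -> 0 < n -> mul a (pw y n) = pw y n.
Proof.
move=> E; elim: n => // n IH _; case: n IH => [|n] IH //.
by rewrite pwS // mulA E.
Qed.

Lemma L_right y a m : mul y a = y -> 0 < m -> mul y (pw a m) = y.
Proof.
move=> E; elim: m => // m IH _; case: m IH => [|m] IH //.
by rewrite pwS // mulA E IH.
Qed.

Lemma pw_absorb y w n m : y \in T -> w \in T -> y <> w -> mul y w = y -> 0 < n -> 0 < m ->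
  mul (pw y n) (pw w m) = pw y n /\ mul (pw w m) (pw y n) = pw y n.
Proof.
move=> yT wT yw E n0 m0; have [C _] := PairT y w yT wT yw.
split; first by apply: absorb_l => //; apply: L_right.
apply: L_left => //; apply: absorb_r => //; by rewrite -C.
Qed.

Lemma pw_idem e m : idem e -> 0 < m -> pw e m = e.
Proof.
move=> E; elim: m => // m IH _; case: m IH => [|m] IH //.
by rewrite pwS // IH.
Qed.

Lemma commR a b : R a -> R b -> mul a b = mul b a.
Proof.
move=> /genR [y [yT [n [n0 ->]]]] /genR [w [wT [m [m0 ->]]]].
case: (eqVneq y w) => [<-|yw]; first exact: pwC.
have yw' : y <> w by apply/eqP.
have [C [H|H]] := PairT y w yT wT yw'.
  by have [-> ->] := pw_absorb y w n m yT wT yw' H n0 m0.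
have H' : mul w y = w by rewrite -C.
by have [-> ->] := pw_absorb w y m n wT yT (nesym yw') H' m0 n0.
Qed.

Lemma notR x : ~ R x -> idem x.
Proof.
move=> nR; apply: NNPP => ni; apply: nR.
have [y [yT [c [/andP [c0 _] ->]]]] := prodT' _ (allNE' _ ni).
exact: RT.
Qed.

Lemma finR : finite_set R.
Proof.
exists (NE ++ map (fun y => pw y (ix y * px y)) T) => b /genR [y [yT [n [n0 ->]]]].
rewrite mem_cat; case: (classic (idem (pw y n))) => H.
  apply/orP; right; apply/mapP; exists y => //.
  apply: (uniq_id y n (ix y * px y) n0 _ H (idem_ip' y)).
  by rewrite muln_gt0 i0 p0.
by apply/orP; left; apply/NE_def.
Qed.

Lemma leN_same y n m : y \in T -> 0 < n -> 0 < m -> leN mul R (pw y n) (pw y m).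
Proof.
move=> yT n0 m0; have H : m < n * m.+1 by rewrite mulnS; nia.
exists m.+1, (pw y (n * m.+1 - m)); split => //; split; first by apply: RT; lia.
rewrite pwM // -pwD //; last lia.
congr pw; lia.
Qed.

Lemma leN_low y w n m : y \in T -> 0 < n -> 0 < m -> mul (pw w m) (pw y n) = pw y n ->
  leN mul R (pw y n) (pw w m).
Proof. by move=> yT n0 m0 E; exists 1, (pw y n); split => //; split; [apply: RT|]. Qed.

Lemma Ychain : Y_chain mul R.
Proof.
move=> a b /genR [y [yT [n [n0 ->]]]] /genR [w [wT [m [m0 ->]]]].
case: (eqVneq y w) => [<-|yw]; first by left; apply: leN_same.
have yw' : y <> w by apply/eqP.
have [C [H|H]] := PairT y w yT wT yw'.
  by left; apply: leN_low => //; have [_ ->] := pw_absorb y w n m yT wT yw' H n0 m0.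
have H' : mul w y = w by rewrite -C.
by right; apply: leN_low => //; have [_ ->] := pw_absorb w y m n wT yT (nesym yw') H' m0 n0.
Qed.

Lemma ltN_abs a b : R a -> R b -> ltN mul R a b -> mul a b = a.
Proof.
move=> /genR [y [yT [n [n0 ->]]]] /genR [w [wT [m [m0 ->]]]] [_ nle].
case: (eqVneq y w) => [E|yw]; first by subst w; exfalso; apply: nle; apply: leN_same.
have yw' : y <> w by apply/eqP.
have [C [H|H]] := PairT y w yT wT yw'.
  by have [-> _] := pw_absorb y w n m yT wT yw' H n0 m0.
have H' : mul w y = w by rewrite -C.
exfalso; apply: nle; apply: leN_low => //.
by have [_ ->] := pw_absorb w y m n wT yT (nesym yw') H' m0 n0.
Qed.

End Fwd3.

Section Fwd4.
Variables (S : eqType) (mul : S -> S -> S).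
Hypothesis mulA : forall x y z, mul x (mul y z) = mul (mul x y) z.
Local Notation pw := (spow mul).
Local Notation idem y := (mul y y = y).
Variable NE : seq S.
Hypothesis NE_uniq : uniq NE.
Hypothesis NE_def : forall x, x \in NE <-> mul x x <> x.
Variable T : seq S.
Hypothesis HT : size T = size NE.
Local Notation inP := (inP S mul).
Hypothesis Hno : forall a, inP T a -> ~ idem a.
Local Notation ix x := (sindex mul x).
Local Notation px x := (speriod mul x).
Local Notation R := (gen mul (fun y => y \in T)).

Let fin x := fin_all S mul mulA NE NE_def x.
Let PairT := Pair S mul mulA NE NE_uniq NE_def T HT Hno.
Let Tni := T_nonidem S mul T Hno.
Let C4' x := C4 S mul mulA x (fin x).
Let back1' x := back1 S mul mulA x (fin x).
Let i0 x := i_gt0 S mul x (fin x).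
Let p0 x := p_gt0 S mul x (fin x).
Let P3' x := P3 S mul mulA x (fin x).
Let uniq_id x := pw_idem_uniq S mul mulA x (fin x).
Let OL' := OL S mul mulA NE NE_uniq NE_def T HT Hno.
Let genR' := genR S mul mulA NE NE_uniq NE_def T HT Hno.
Let RT' := RT S mul mulA NE NE_uniq NE_def T HT Hno.
Let pw_absorb' := pw_absorb S mul mulA NE NE_uniq NE_def T HT Hno.
Let leN_same' := leN_same S mul mulA NE NE_uniq NE_def T HT Hno.
Let leN_low' := leN_low S mul mulA NE NE_uniq NE_def T HT Hno.

Definition partner y w := y <> w /\ exists j k, 0 < j /\ 0 < k /\ pw y j = pw w k.

Lemma partner_sym y w : partner y w -> partner w y.
Proof. by move=> [yw [j [k [j0 [k0 E]]]]]; split; [apply: nesym|exists k, j]. Qed.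

Lemma IL y w j k : y \in T -> w \in T -> y <> w -> mul y w = y -> 0 < j -> 0 < k ->
  pw y j = pw w k -> ix y = 1 /\ idem (pw y j).
Proof.
move=> yT wT yw E j0 k0 Ez.
have [i1 pj] := back1' y j j0 (OL' y w j k yT wT yw E j0 k0 Ez).
by split => //; apply/(C4' y j j0); rewrite i1.
Qed.

Lemma partner_idem y w j k : y \in T -> w \in T -> y <> w -> 0 < j -> 0 < k ->
  pw y j = pw w k -> idem (pw y j).
Proof.
move=> yT wT yw j0 k0 Ez.
have [C [H|H]] := PairT y w yT wT yw; first by have [_ ->] := IL y w j k yT wT yw H j0 k0 Ez.
have H' : mul w y = w by rewrite -C.
by rewrite Ez; have [_ ->] := IL w y k j wT yT (nesym yw) H' k0 j0 (esym Ez).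
Qed.

Lemma between l m t j k : l \in T -> m \in T -> t \in T -> l <> m -> m <> t ->
  mul l m = l -> mul m t = m -> 0 < j -> 0 < k -> pw l j = pw t k -> False.
Proof.
move=> lT mT tT lm mt Hlm Hmt j0 k0 E.
have Hlt : mul l t = l by rewrite -{1}Hlm -mulA Hmt Hlm.
have [C _] := PairT l m lT mT lm.
have lt : l <> t by move=> elt; subst t; apply: lm; rewrite -Hlm C Hmt.
apply: (Tni m mT).
have [_ Hid] := IL l t j k lT tT lt Hlt j0 k0 E.
have Em : m = pw l j.
  rewrite -{1}(L_right S mul mulA m t k Hmt k0) -E.
  by apply: L_left => //; rewrite -C.
by rewrite Em.
Qed.

Lemma three a b c ja jb jc : a \in T -> b \in T -> c \in T -> a <> b -> b <> c -> a <> c ->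
  0 < ja -> 0 < jb -> 0 < jc -> pw a ja = pw b jb -> pw b jb = pw c jc -> False.
Proof.
move=> aT bT cT ab bc ac ja0 jb0 jc0 Eab Ebc.
have O : forall u v, u \in T -> v \in T -> u <> v -> mul u v = u \/ mul v u = v.
  move=> u v uT vT uv; have [C [H|H]] := PairT u v uT vT uv; [by left|by right; rewrite -C].
have Eac : pw a ja = pw c jc by rewrite Eab.
case: (O a b aT bT ab) => H1; case: (O b c bT cT bc) => H2.
- exact: (between a b c ja jc aT bT cT ab bc H1 H2).
- case: (O a c aT cT ac) => H3.
  + exact: (between a c b ja jb aT cT bT ac (nesym bc) H3 H2).
  + exact: (between c a b jc jb cT aT bT (nesym ac) ab H3 H1).
- case: (O a c aT cT ac) => H3.
  + exact: (between b a c jb jc bT aT cT (nesym ab) ac H1 H3).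
  + exact: (between b c a jb ja bT cT aT bc (nesym ac) H2 H3).
- exact: (between c b a jc ja cT bT aT (nesym bc) (nesym ab) H2 H1).
Qed.

Lemma partner_uniq y w w' : y \in T -> w \in T -> w' \in T -> partner y w -> partner y w' -> w = w'.
Proof.
move=> yT wT w'T [yw [j [k [j0 [k0 E]]]]] [yw' [j' [k' [j0' [k0' E']]]]].
apply: NNPP => ww.
have I1 := partner_idem y w j k yT wT yw j0 k0 E.
have I2 := partner_idem y w' j' k' yT w'T yw' j0' k0' E'.
have Eyy := uniq_id y j j' j0 j0' I1 I2.
apply: (three y w w' j k k' yT wT w'T yw ww yw' j0 k0 k0' E).
by rewrite -E Eyy.
Qed.

Lemma NR_same y n m : y \in T -> 0 < n -> 0 < m -> NR mul R (pw y n) (pw y m).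
Proof. by move=> yT n0 m0; split; apply: leN_same'. Qed.

Lemma NR_part_low y w n m : y \in T -> w \in T -> partner y w -> mul y w = y -> 0 < n -> 0 < m ->
  NR mul R (pw y n) (pw w m).
Proof.
move=> yT wT [yw [j [k [j0 [k0 E]]]]] H n0 m0.
split; first by apply: leN_low' => //; have [_ ->] := pw_absorb' y w n m yT wT yw H n0 m0.
have [i1 Id] := IL y w j k yT wT yw H j0 k0 E.
have pp := p0 y.
exists k, (pw y (px y * n.+1 - n)); split => //; split.
  apply: RT' => //; have : n < px y * n.+1 by rewrite mulnS; nia. lia.
have Hn : n < px y * n.+1 by rewrite mulnS; nia.
rewrite -pwD //; last lia.
have -> : n + (px y * n.+1 - n) = px y * n.+1 by lia.
have -> : pw (pw w m) k = pw y j.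
  by rewrite pwM // mulnC -pwM // -E pw_idem.
have pos : 0 < px y * n.+1 by rewrite muln_gt0 pp.
apply: (uniq_id y j (px y * n.+1) j0 pos Id).
by apply/(C4' y _ pos); rewrite i1 dvdn_mulr // pos.
Qed.

Lemma NR_sym a b : NR mul R a b -> NR mul R b a.
Proof. by case. Qed.

Lemma NR_part y w n m : y \in T -> w \in T -> partner y w -> 0 < n -> 0 < m ->
  NR mul R (pw y n) (pw w m).
Proof.
move=> yT wT Pyw n0 m0; have yw := Pyw.1.
have [C [H|H]] := PairT y w yT wT yw; first exact: NR_part_low.
apply: NR_sym; apply: NR_part_low => //; [exact: partner_sym | by rewrite -C].
Qed.

Lemma leN_part y w n m : y \in T -> w \in T -> y <> w -> mul y w = y -> 0 < n -> 0 < m ->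
  leN mul R (pw w m) (pw y n) -> partner y w.
Proof.
move=> yT wT yw H n0 m0 [M [c [M0 [/genR' [u [uT [k [k0 ->]]]] E]]]].
rewrite pwM // in E; have mM : 0 < m * M by rewrite muln_gt0 m0.
case: (eqVneq u y) => [eu|uy].
  subst u; rewrite -pwD // in E.
  by split => //; exists (n + k), (m * M); split; [lia|split => //].
have uy' : u <> y by apply/eqP.
have [C [H2|H2]] := PairT y u yT uT (nesym uy').
  have [E2 _] := pw_absorb' y u n k yT uT (nesym uy') H2 n0 k0.
  by rewrite E2 in E; split => //; exists n, (m * M).
have H2' : mul u y = u by rewrite -C.
have [_ E2] := pw_absorb' u y k n uT yT uy' H2' k0 n0.
rewrite E2 in E; exfalso.
have uw : u <> w.
  move=> euw; subst u; apply: yw; by rewrite -H C H2'.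
exact: (between u y w k (m * M) uT yT wT uy' yw H2' H k0 mM (esym E)).
Qed.

Lemma NR_inv y w n m : y \in T -> w \in T -> y <> w -> 0 < n -> 0 < m ->
  NR mul R (pw y n) (pw w m) -> partner y w.
Proof.
move=> yT wT yw n0 m0 [l1 l2].
have [C [H|H]] := PairT y w yT wT yw; first exact: (leN_part y w n m).
apply: partner_sym; apply: (leN_part w y m n) => //; [exact: nesym | by rewrite -C].
Qed.

Lemma class_char y n u k : y \in T -> u \in T -> 0 < n -> 0 < k ->
  (R (pw u k) /\ NR mul R (pw y n) (pw u k)) <-> (u = y \/ partner y u).
Proof.
move=> yT uT n0 k0; split.
  move=> [_ HN]; case: (eqVneq u y) => [->|uy]; first by left.
  by right; apply: (NR_inv y u n k) => //; apply/eqP; rewrite eq_sym.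
move=> [->|Pyu]; split; try exact: RT'.
  exact: NR_same.
exact: NR_part.
Qed.

Lemma IE (C : S -> Prop) x1 x2 : x1 \in T -> x2 \in T -> partner x2 x1 -> mul x2 x1 = x2 ->
  (forall b, C b <-> (gen1 mul x1 b \/ gen1 mul x2 b)) -> ideal_ext_case mul C x1 x2.
Proof.
move=> x1T x2T [x21 [j [k [j0 [k0 Ej]]]]] H CE.
have [i1 Id] := IL x2 x1 j k x2T x1T x21 H j0 k0 Ej.
have pp := p0 x2.
have [Cm _] := PairT x2 x1 x2T x1T x21.
have H' : mul x1 x2 = x2 by rewrite -Cm.
set e := pw x2 (px x2).
have Ie : idem e by apply/(C4' x2 _ pp); rewrite i1 pp dvdnn.
have eG : forall g, gen1 mul x2 g -> mul e g = g /\ mul g e = g.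
  move=> g [m [m0 ->]].
  have E1 : mul e (pw x2 m) = pw x2 m.
    rewrite /e -pwD //; apply: P3' => //; [lia | lia |].
    by rewrite modnDl.
  by split => //; rewrite pwC.
rewrite /ideal_ext_case /=; split.
  by move=> g Hg; apply/CE; right.
split.
  move=> a g /CE [[m [m0 ->]]|[m [m0 ->]]] [m' [m0' ->]].
    have [E1 E2] := pw_absorb' x2 x1 m' m x2T x1T x21 H m0' m0.
    by rewrite E1 E2; split; exists m'.
  by rewrite -!pwD //; split; [exists (m + m') | exists (m' + m)]; split => //; lia.
split.
  exists e; split; first by exists (px x2).
  split => //; split.
    move=> g [m [m0 ->]].
    have Hm : m < px x2 * m.+1 by rewrite mulnS; nia.
    have pos : 0 < px x2 * m.+1 by rewrite muln_gt0 pp.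
    have Eg : mul (pw x2 m) (pw x2 (px x2 * m.+1 - m)) = e.
      rewrite -pwD //; last lia.
      have -> : m + (px x2 * m.+1 - m) = px x2 * m.+1 by lia.
      apply: uniq_id => //; apply/(C4' x2 _ pos); rewrite i1 pos dvdn_mulr //.
    exists (pw x2 (px x2 * m.+1 - m)); split; first by exists (px x2 * m.+1 - m); split => //; lia.
    by split => //; rewrite pwC //; lia.
  split.
    exists x2; split; first by exists 1.
    by move=> E; apply: (Tni x2 x2T); rewrite E.
  by rewrite /e L_left.
split; first by apply/CE; left; exists 1.
split.
  move=> [m [m0 E]]; apply: (Tni x1 x1T).
  have : pw x2 m.+1 = x2 by rewrite pwS // -E.
  move/(back1' x2 m m0) => [_ pd].
  by rewrite E; apply/(C4' x2 m m0); rewrite i1.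
split.
  by move=> b /CE [//|].
move=> b /CE [[m [m0 ->]]|[m [m0 ->]]].
  exists k; split => //; exists (j * m); split; first by rewrite muln_gt0 j0.
  by rewrite pwM // mulnC -pwM // -Ej pwM.
by exists 1; split => //; exists m.
Qed.

Lemma comp_ok a : R a -> arch_component_ok mul T (fun b => R b /\ NR mul R a b).
Proof.
move=> /genR' [y [yT [n [n0 ->]]]].
have memR : forall b, R b /\ NR mul R (pw y n) b <-> exists u k, u \in T /\ 0 < k /\ b = pw u k /\ (u = y \/ partner y u).
  move=> b; split.
    move=> [Rb HN]; move: (Rb) => /genR' [u [uT [k [k0 Eb]]]]; subst b.
    by exists u, k; split => //; split => //; split => //; apply/(class_char y n u k).
  move=> [u [k [uT [k0 [-> Hu]]]]]; exact/(class_char y n u k).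
case: (classic (exists w, w \in T /\ partner y w)) => [[w [wT Pyw]]|NP].
  right.
  have yw := Pyw.1.
  have key : forall x1 x2, x1 \in T -> x2 \in T -> ((x1 = y /\ x2 = w) \/ (x1 = w /\ x2 = y)) ->
     forall b, (R b /\ NR mul R (pw y n) b) <-> (gen1 mul x1 b \/ gen1 mul x2 b).
    move=> x1 x2 x1T x2T Hx b; rewrite memR; split.
      move=> [u [k [uT [k0 [-> Hu]]]]].
      have : u = y \/ u = w.
        case: Hu => [|Pyu]; first by left.
        by right; apply: (partner_uniq y u w).
      by case: Hx => [[-> ->]|[-> ->]] [->|->]; [left|right|right|left]; exists k.
    case: Hx => [[-> ->]|[-> ->]] [[k [k0 ->]]|[k [k0 ->]]].
    - by exists y, k; split => //; split => //; split => //; left.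
    - by exists w, k; split => //; split => //; split => //; right.
    - by exists w, k; split => //; split => //; split => //; right.
    - by exists y, k; split => //; split => //; split => //; left.
  have [C [H|H]] := PairT y w yT wT yw.
    exists w, y; split => //; split => //.
    apply: IE => //.
    by apply: key => //; right.
  exists y, w; split => //; split => //.
  apply: IE => //; first exact: partner_sym.
  - by rewrite -C.
  - by apply: key => //; left.
left; exists y; split => //; split.
  move=> b; rewrite memR; split.
    move=> [u [k [uT [k0 [-> [->|Pyu]]]]]]; first by exists k.
    by exfalso; apply: NP; exists u.
  by move=> [k [k0 ->]]; exists y, k; split => //; split => //; split => //; left.
exact: (cnt_ok S mul mulA NE NE_uniq NE_def T HT Hno y yT).1.
Qed.

End Fwd4.

Definition sumf (T : Type) (D : seq T) (f : T -> nat) := foldr (fun z acc => f z + acc) 0 D.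
Arguments sumf {T}.

Lemma sumf_add (T : Type) D (f g : T -> nat) : sumf D (fun z => f z + g z) = sumf D f + sumf D g.
Proof. elim: D => //= d D ->; lia. Qed.

Lemma sumf_le (T : eqType) D (f g : T -> nat) : (forall z, z \in D -> f z <= g z) -> sumf D f <= sumf D g.
Proof.
elim: D => //= d D IH H.
have := H d (mem_head _ _); have := IH (fun z zD => H z (mem_behead (s := d :: D) zD)); lia.
Qed.

Lemma sumf_eq (T : eqType) D (f g : T -> nat) : (forall z, z \in D -> f z = g z) -> sumf D f = sumf D g.
Proof.
elim: D => //= d D IH H.
by rewrite H ?mem_head // IH // => z zD; apply: H; rewrite inE zD orbT.
Qed.

Lemma sumf_count (T : eqType) (D s : seq T) : uniq D -> {subset s <= D} ->
  sumf D (fun z => count_mem z s) = size s.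
Proof.
move=> uD; elim: s => [|x s IH] sD /=.
  by elim: D {uD sD} => //= d D ->.
rewrite sumf_add IH; last by move=> z zs; apply: sD; rewrite inE zs orbT.
have -> : sumf D (fun z => nat_of_bool (x == z)) = count_mem x D.
  by elim: D {uD sD IH} => //= d D ->; rewrite eq_sym.
by rewrite count_uniq_mem // sD // mem_head.
Qed.

Lemma union_count (T : eqType) (D : seq T) (K : T -> pred T) (s : seq T) :
  count (fun x => has (fun z => K z x) D) s <= sumf D (fun z => count (K z) s).
Proof.
elim: D => [|d D IH] /=; first by rewrite count_pred0.
have := count_predUI (K d) (fun x => has (fun z => K z x) D) s.
have E : count (fun x => K d x || has (fun z => K z x) D) s = count (predU (K d) (fun x => has (fun z => K z x) D)) s by [].
rewrite -E in IH *; lia.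
Qed.

Lemma union_count_lt (T : eqType) (D : seq T) (K : T -> pred T) (s : seq T) :
  uniq D -> (exists x z z', x \in s /\ z \in D /\ z' \in D /\ z != z' /\ K z x /\ K z' x) ->
  count (fun x => has (fun z => K z x) D) s < sumf D (fun z => count (K z) s).
Proof.
elim: D => [|d D IH] /=; first by move=> _ [x [z [z' [_ [//]]]]].
move=> /andP [dD uD] [x [z [z' [xs [zD [z'D [zz [Kz Kz']]]]]]]].
have UI := count_predUI (K d) (fun x => has (fun z => K z x) D) s.
have E : count (fun x => K d x || has (fun z => K z x) D) s = count (predU (K d) (fun x => has (fun z => K z x) D)) s by [].
rewrite E.
move: zD z'D; rewrite !inE => /orP [/eqP ez|zD] /orP [/eqP ez'|z'D].
- by subst; rewrite eqxx in zz.
- have : 0 < count (predI (K d) (fun x => has (fun z => K z x) D)) s.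
    rewrite -has_count; apply/hasP; exists x => //=; apply/andP; split; first by rewrite -ez.
    by apply/hasP; exists z'.
  have := union_count T D K s; lia.
- have : 0 < count (predI (K d) (fun x => has (fun z => K z x) D)) s.
    rewrite -has_count; apply/hasP; exists x => //=; apply/andP; split; first by rewrite -ez'.
    by apply/hasP; exists z.
  have := union_count T D K s; lia.
- have := IH uD (ex_intro _ x (ex_intro _ z (ex_intro _ z' (conj xs (conj zD (conj z'D (conj zz (conj Kz Kz')))))))).
  lia.
Qed.

Lemma count_mem_le (T : eqType) (s L : seq T) : uniq s -> count (mem L) s <= size L.
Proof.
move=> us; rewrite -size_filter; apply: uniq_leq_size; first exact: filter_uniq.
by move=> z; rewrite mem_filter => /andP [].
Qed.

Section Bwd.
Variables (S : eqType) (mul : S -> S -> S).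
Hypothesis mulA : forall x y z, mul x (mul y z) = mul (mul x y) z.
Local Notation pw := (spow mul).
Local Notation idem y := (mul y y = y).
Variable NE : seq S.
Hypothesis NE_uniq : uniq NE.
Hypothesis NE_def : forall x, x \in NE <-> mul x x <> x.
Variable T : seq S.
Hypothesis HT : size T = size NE.
Local Notation inP := (inP S mul).
Local Notation ix x := (sindex mul x).
Local Notation px x := (speriod mul x).
Local Notation R := (gen mul (fun y => y \in T)).
Hypothesis Hcomm : forall x y, R x -> R y -> mul x y = mul y x.
Hypothesis Hout : forall x, ~ R x -> idem x.
Hypothesis HY : Y_chain mul R.
Hypothesis Hlt : forall x1 x2, R x1 -> R x2 -> ltN mul R x1 x2 -> mul x1 x2 = x1.
Hypothesis Hcomp : forall a, R a -> arch_component_ok mul T (fun b => R b /\ NR mul R a b).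
Hypothesis Hcnt : forall x, x \in T -> count_mem x T = ix x + px x - 2.

Let fin x := fin_all S mul mulA NE NE_def x.
Let C4' x := C4 S mul mulA x (fin x).
Let back1' x := back1 S mul mulA x (fin x).
Let back2' x := back2 S mul mulA x (fin x).
Let i0 x := i_gt0 S mul x (fin x).
Let p0 x := p_gt0 S mul x (fin x).
Let P3' x := P3 S mul mulA x (fin x).
Let nonidem_range' x := nonidem_range S mul mulA x (fin x).

Lemma idem1 x : idem x -> ix x = 1 /\ px x = 1.
Proof.
move=> /(C4' x 1 isT) [H1 H2]; have := i0 x; split; first lia.
by apply/eqP; rewrite -dvdn1.
Qed.

Lemma Tni x : x \in T -> ~ idem x.
Proof.
move=> xT /idem1 [H1 H2]; have := Hcnt x xT; rewrite H1 H2 /=.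
have : 0 < count_mem x T by rewrite -has_count has_pred1.
lia.
Qed.

Lemma RTb y n : y \in T -> 0 < n -> R (pw y n).
Proof.
move=> yT n0; exists y, (nseq n.-1 y); split => //; split; first by move=> z /nseqP [->].
by rewrite wprod_nseq // prednK.
Qed.

Lemma NRrefl b : R b -> NR mul R b b.
Proof. by move=> Rb; split; exists 2, b. Qed.

Lemma Rpow b : R b -> exists z, z \in T /\ gen1 mul z b.
Proof.
move=> Rb; case: (Hcomp b Rb) => [[x [xT [CE _]]]|[x1 [x2 [x1T [x2T IEC]]]]].
  by exists x; split => //; apply/CE; split => //; apply: NRrefl.
case: IEC => [_ [_ [_ [_ [_ [H6 _]]]]]].
case: (classic (gen1 mul x2 b)) => G2; first by exists x2.
by exists x1; split => //; apply: H6 => //; split => //; apply: NRrefl.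
Qed.

Definition Kz z := fun s => bP (~ idem s /\ gen1 mul z s).

Lemma Kcount z : z \in T -> count (Kz z) NE <= ix z + px z - 2.
Proof.
move=> zT; have ii := i0 z; have pp := p0 z.
set L := map (pw z) (iota 1 (ix z + px z - 1)).
set L' := filter (fun s => bP (~ idem s)) L.
apply: leq_trans (_ : count (mem L') NE <= _).
  apply: sub_count => s /bPE [ns [k [k0 Es]]] /=.
  rewrite mem_filter; apply/andP; split; first by apply/bPE.
  case: (leqP k (ix z + px z - 1)) => kb.
    by apply/mapP; exists k; rewrite // mem_iota; lia.
  apply/mapP; exists (ix z + (k - ix z) %% px z).
    rewrite mem_iota; have : (k - ix z) %% px z < px z by rewrite ltn_mod. lia.
  rewrite Es; apply: P3'; [lia | lia |].
  rewrite modnDmr; congr modn; lia.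
apply: leq_trans (count_mem_le _ _ _ NE_uniq) _.
rewrite size_filter.
have : count (fun s => bP (~ idem s)) L < size L.
  rewrite -[size L](count_predC (fun s => bP (~ idem s))).
  rewrite -[X in X < _]addn0 ltn_add2l -has_count.
  set m := (ix z + px z - 1) %/ px z * px z.
  have Hm := divn_eq (ix z + px z - 1) (px z).
  have mp : (ix z + px z - 1) %% px z < px z by rewrite ltn_mod.
  apply/hasP; exists (pw z m).
    apply/mapP; exists m => //; rewrite mem_iota; have : 0 < m by lia. lia.
  rewrite /= /predC /=; apply/negP => /bPE; apply.
  by apply/(C4' z m ltac:(lia)); split; [lia | rewrite dvdn_mull].
rewrite size_map size_iota; lia.
Qed.

Lemma D1 z z' k k' : z \in T -> z' \in T -> z <> z' -> 0 < k -> 0 < k' ->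
  pw z k = pw z' k' -> ~ idem (pw z k) -> False.
Proof.
move=> zT z'T zz k0 k0' E ni.
set D := undup T.
have cov : count (fun x => has (fun u => Kz u x) D) NE = size NE.
  apply/eqP; rewrite -all_count; apply/allP => x /NE_def nx.
  have Rx : R x by apply: NNPP => nR; apply: nx; apply: Hout.
  have [u [uT Hu]] := Rpow x Rx.
  by apply/hasP; exists u; [rewrite mem_undup | apply/bPE].
have lt : count (fun x => has (fun u => Kz u x) D) NE < sumf D (fun u => count (Kz u) NE).
  apply: union_count_lt; first exact: undup_uniq.
  exists (pw z k), z, z'; split; first exact/NE_def.
  split; first by rewrite mem_undup.
  split; first by rewrite mem_undup.
  split; first by apply/eqP.
  by split; apply/bPE; split => //; [exists k | exists k'].
have le : sumf D (fun u => count (Kz u) NE) <= sumf D (fun u => count_mem u T).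
  apply: sumf_le => u; rewrite mem_undup => uT; rewrite Hcnt //; exact: Kcount.
have sc : sumf D (fun u => count_mem u T) = size T.
  by apply: sumf_count; [exact: undup_uniq | move=> u; rewrite mem_undup].
lia.
Qed.

Lemma gen1_T u w : u \in T -> w \in T -> gen1 mul u w -> w = u.
Proof.
move=> uT wT [k [k0 E]]; apply: NNPP => wu.
apply: (D1 u w k 1 uT wT (nesym wu) k0 isT (esym E)).
by rewrite -E; apply: Tni.
Qed.

Lemma IE_props C x1 x2 : ideal_ext_case mul C x1 x2 ->
  (forall b, C b -> gen1 mul x2 b \/ gen1 mul x1 b) /\ mul x1 x2 = x2 /\ ix x2 = 1 /\ px x1 = 1.
Proof.
move=> [H1 [H2 [[e [[j [j0 Ge]] [Eid [Inv [NT x1e]]]]] [Cx1 [nGx1 [H6 H7]]]]]].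
have x2G : gen1 mul x2 x2 by exists 1.
have [ex2 _] := Eid x2 x2G.
split.
  move=> b Cb; case: (classic (gen1 mul x2 b)) => G2; [by left | by right; apply: H6].
split; first by rewrite -{1}ex2 mulA x1e.
split.
  have : pw x2 j.+1 = x2.
    by rewrite pwS // -{1}(pw1 S mul x2) pwC // -Ge.
  by move/(back1' x2 j j0) => [].
have [n [n0 Gn]] := H7 x1 Cx1.
have [_ E1] := Eid _ Gn.
have E2 : mul (pw x1 n) e = e by apply: absorb_r.
have E3 : pw x1 n = e by rewrite -E1 E2.
apply: (back2' x1 n n0).
by rewrite pwS // E3.
Qed.

Lemma PairB z z' : z \in T -> z' \in T -> z <> z' ->
  mul z z' = mul z' z /\ (mul z z' = z \/ mul z z' = z').
Proof.
move=> zT z'T zz.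
have Rz : R z by have := RTb z 1 zT isT.
have Rz' : R z' by have := RTb z' 1 z'T isT.
have C := Hcomm z z' Rz Rz'.
split => //.
have cls : NR mul R z z' -> mul z z' = z \/ mul z z' = z'.
  move=> HN; case: (Hcomp z Rz) => [[x [xT [CE _]]]|[x1 [x2 [x1T [x2T IEC]]]]].
    have g1 := (CE z).1 (conj Rz (NRrefl z Rz)).
    have g2 := (CE z').1 (conj Rz' HN).
    by exfalso; apply: zz; rewrite (gen1_T x z) // (gen1_T x z').
  have [Cl [M _]] := IE_props _ _ _ IEC.
  have e1 : z = x1 \/ z = x2.
    case: (Cl z (conj Rz (NRrefl z Rz))) => g; [right|left]; exact: gen1_T.
  have e2 : z' = x1 \/ z' = x2.
    case: (Cl z' (conj Rz' HN)) => g; [right|left]; exact: gen1_T.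
  case: e1 => E1; case: e2 => E2; subst z z'.
  - by case: zz.
  - by right.
  - left; rewrite (Hcomm x2 x1) ?M //; apply: (RTb _ 1) => //.
  - by case: zz.
case: (HY z z' Rz Rz') => l1.
  case: (classic (leN mul R z' z)) => l2; first by apply: cls.
  by left; apply: Hlt.
case: (classic (leN mul R z z')) => l2; first by apply: cls.
by right; rewrite C; apply: Hlt.
Qed.

Lemma congB z : z \in T -> ix z = 1 %[mod px z].
Proof.
move=> zT; have Rz : R z by have := RTb z 1 zT isT.
case: (Hcomp z Rz) => [[x [xT [CE Hc]]]|[x1 [x2 [x1T [x2T IEC]]]]].
  by have g := (CE z).1 (conj Rz (NRrefl z Rz)); rewrite (gen1_T x z xT zT g).
have [Cl [_ [ix2 px1]]] := IE_props _ _ _ IEC.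
case: (Cl z (conj Rz (NRrefl z Rz))) => g.
  by rewrite (gen1_T x2 z) // ix2.
by rewrite (gen1_T x1 z) // px1 !modn1.
Qed.

Lemma bwd a : inP T a -> ~ idem a.
Proof.
move=> [x [l [ms ->]]].
have inT : forall z, z \in x :: l -> z \in T.
  move=> z zl; have H2 := ms z.
  have H1 : 0 < count_mem z (x :: l) by rewrite -has_count has_pred1.
  rewrite -has_pred1 has_count; exact: leq_trans H1 H2.
have [y [yl [E _]]] := prod_form S mul mulA (fun z => z \in T) PairB x l (inT x (mem_head _ _))
   (fun z zl => inT z (mem_behead (s := x :: l) zl)).
rewrite E; have yT := inT y yl.
apply: nonidem_range' => //; first exact: congB.
  by rewrite -has_count has_pred1.
by rewrite -Hcnt //; apply: ms.
Qed.

End Bwd.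

Theorem theorem3p2 (S : eqType) (mul : S -> S -> S)
  (mulA : forall x y z, mul x (mul y z) = mul (mul x y) z)
  (HS : inhabited S)
  (NE : seq S) (NE_uniq : uniq NE) (NE_def : forall x, x \in NE <-> mul x x <> x)
  (T : seq S) (HT : size T = size NE) :
  (forall a, in_Prod mul T a -> mul a a <> a) <->
  (let R := gen mul (fun y => y \in T) in
   finite_set R /\
   (forall x y, R x -> R y -> mul x y = mul y x) /\
   (forall x, ~ R x -> mul x x = x) /\
   Y_chain mul R /\
   (forall x1 x2, R x1 -> R x2 -> ltN mul R x1 x2 -> mul x1 x2 = x1) /\
   (forall a, R a -> arch_component_ok mul T (fun b => R b /\ NR mul R a b)) /\
   (forall x, x \in T -> count_mem x T = sindex mul x + speriod mul x - 2)).
Proof.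
split.
  move=> H0.
  have Hno : forall a, inP S mul T a -> mul a a <> a.
    by move=> a /in_Prod_iff; apply: H0.
  cbv zeta.
  have X1 := finR S mul mulA NE NE_uniq NE_def T HT Hno.
  have X2 := commR S mul mulA NE NE_uniq NE_def T HT Hno.
  have X3 := notR S mul mulA NE NE_uniq NE_def T HT Hno.
  have X4 := Ychain S mul mulA NE NE_uniq NE_def T HT Hno.
  have X5 := ltN_abs S mul mulA NE NE_uniq NE_def T HT Hno.
  have X6 := comp_ok S mul mulA NE NE_uniq NE_def T HT Hno.
  have X7 : forall x, x \in T -> count_mem x T = sindex mul x + speriod mul x - 2.
    by move=> x xT; have [_ ->] := cnt_ok S mul mulA NE NE_uniq NE_def T HT Hno x xT.
  by split; [exact: X1|split; [exact: X2|split; [exact: X3|split; [exact: X4|split; [exact: X5| split; [exact: X6|exact: X7]]]]]].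
cbv zeta; move=> [Hfin [Hcomm [Hout [HY [Hlt [Hcomp Hcnt]]]]]] a /in_Prod_iff.
exact: (bwd S mul mulA NE NE_uniq NE_def T HT Hcomm Hout HY Hlt Hcomp Hcnt a).
Qed.
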